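(* Let $N>0$, $m>0$, $F>0$, $\alpha>0$, $w>0$, $\tau\in(0,1)$, $g\geq 0$, $L_g\geq 0$, and define \[ L=\frac{N\left[(1-\tau)(mL_g+\alpha F)+(mg+F)mN\right]}{\alpha+(Nm-\alpha)\tau},\qquad q=\frac{(1-\tau)(L+L_g-\alpha g)}{\left(Nm+\alpha(1-\tau)\right)(L+L_g)}, \] \[ p=\frac{L+L_g}{L+L_g-\alpha g}\left(mw+\frac{\alpha(1-\tau)w}{N}\right). \] If $Nm>\alpha$, then $L+L_g-\alpha\left((L+L_g)q+g\right)>0$, and the price $p$ is positive.
   Context: These are the symmetric-equilibrium quantities of a monopolistic-competition general equilibrium model: $N$ is the measure of firms (= varieties), $m$ and $F$ the marginal and fixed labor inputs, $\alpha$ the CARA utility parameter, $w$ the nominal wage, $\tau$ the proportional income tax rate, $g$ the government purchase of each variety, $L_g$ government employment, $L$ private employment, $q$ per-capita consumption of each variety, and $p$ the common price. They satisfy $L=N[m(L+L_g)q+mg+F]$, $q=(1-\tau)w/(Np)$, and equivalently $p=mw(L+L_g)/\left(L+L_g-\alpha((L+L_g)q+g)\right)$. *)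

(* Defs.v *)
From Stdlib Require Import Reals.
Open Scope R_scope.

Definition Lpriv (N m F alpha tau g Lg : R) : R :=
  N * ((1 - tau) * (m * Lg + alpha * F) + (m * g + F) * m * N)
  / (alpha + (N * m - alpha) * tau).

Definition qcons (N m F alpha tau g Lg : R) : R :=
  let L := Lpriv N m F alpha tau g Lg in
  (1 - tau) * (L + Lg - alpha * g)
  / ((N * m + alpha * (1 - tau)) * (L + Lg)).

Definition price (N m F alpha w tau g Lg : R) : R :=
  let L := Lpriv N m F alpha tau g Lg in
  (L + Lg) / (L + Lg - alpha * g) * (m * w + alpha * (1 - tau) * w / N).

(* Main.v *)
Require Import Defs.
From Stdlib Require Import Reals Lra Psatz.
Open Scope R_scope.

Theorem proposition2 (N m F alpha w tau g Lg : R) :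
  0 < N -> 0 < m -> 0 < F -> 0 < alpha -> 0 < w ->
  0 < tau < 1 -> 0 <= g -> 0 <= Lg ->
  N * m > alpha ->
  let L := Lpriv N m F alpha tau g Lg in
  let q := qcons N m F alpha tau g Lg in
  let p := price N m F alpha w tau g Lg in
  L + Lg - alpha * ((L + Lg) * q + g) > 0 /\ p > 0.
Proof.
  intros HN Hm HF Ha Hw [Ht1 Ht2] Hg HLg HNm L q p.
  assert (Hden : 0 < alpha + (N * m - alpha) * tau) by nra.
  assert (HL : L > alpha * g).
  { unfold L, Lpriv.
    apply Rmult_lt_reg_r with (alpha + (N * m - alpha) * tau); [lra|].
    match goal with |- _ < ?x / ?d * ?d => replace (x / d * d) with x by (field; lra) end.
    assert (HX : alpha + (N * m - alpha) * tau < N * m) by nra.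
    assert (0 < N * m * N * m - alpha * (alpha + (N * m - alpha) * tau)).
    { assert (alpha * (alpha + (N * m - alpha) * tau) < alpha * (N * m)) by (apply Rmult_lt_compat_l; lra).
      assert (alpha * (N * m) < N * m * (N * m)) by (apply Rmult_lt_compat_r; lra).
      lra. }
    assert (0 <= g * (N * m * N * m - alpha * (alpha + (N * m - alpha) * tau))) by nra.
    assert (0 < N * ((1 - tau) * (m * Lg + alpha * F) + F * m * N)).
    { apply Rmult_lt_0_compat; [lra|].
      assert (0 <= m * Lg) by nra. assert (0 < alpha * F) by nra.
      assert (0 <= (1 - tau) * (m * Lg + alpha * F)) by nra.
      assert (0 < F * m * N) by (repeat apply Rmult_lt_0_compat; lra). lra. }
    assert (E : N * ((1 - tau) * (m * Lg + alpha * F) + (m * g + F) * m * N)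
      = N * ((1 - tau) * (m * Lg + alpha * F) + F * m * N) + g * (N * m * N * m)) by ring.
    rewrite E. nra. }
  assert (HS : L + Lg - alpha * g > 0) by lra.
  assert (HD : 0 < N * m + alpha * (1 - tau)) by nra.
  assert (HS0 : 0 < L + Lg) by nra.
  split.
  - unfold q, qcons. fold L.
    replace (L + Lg - alpha * ((L + Lg) * ((1 - tau) * (L + Lg - alpha * g) /
      ((N * m + alpha * (1 - tau)) * (L + Lg))) + g))
      with ((L + Lg - alpha * g) * (N * m) / (N * m + alpha * (1 - tau))) by (field; lra).
    apply Rdiv_lt_0_compat; [|lra]. nra.
  - unfold p, price. fold L.
    apply Rmult_lt_0_compat.
    + apply Rdiv_lt_0_compat; lra.
    + assert (0 < alpha * (1 - tau) * w / N).
      { apply Rdiv_lt_0_compat; [|lra]. apply Rmult_lt_0_compat; nra. }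
      nra.
Qed.
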